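(* For every $n\ge 1$, the burning number of the directed path $P_n$ on $n$ nodes is $\left\lceil \sqrt{2n+\tfrac14}-\tfrac12\right\rceil$.
   Context: Burning process on a digraph $D$: a sequence $(x_1,\ldots,x_b)$ of nodes is a burning sequence for $D$ if after $b$ steps of the following process every node of $D$ is burned; the $i$-th step consists of first burning all out-neighbours of all currently burned nodes, and then burning the node $x_i$. The burning number of $D$ is the length of a shortest burning sequence. Equivalently, with $N^+_k(v)$ the set of nodes reachable from $v$ by a directed path with at most $k$ arcs, the burning number is the least $b$ such that there are nodes $v_1,\ldots,v_b$ with $V(D)=\bigcup_{i=1}^b N^+_{i-1}(v_i)$. *)

(* Defs.v *)
From HB Require Import structures.
From mathcomp Require Import all_boot all_order all_algebra.
From mathcomp Require Import reals.
Set Implicit Arguments. Unset Strict Implicit. Unset Printing Implicit Defensive.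

(* A digraph is a finite type T with an arc relation e : rel T (e u v = arc u->v). *)

(* reach_le e k v w : w is reachable from v by a directed path with at most k arcs,
   i.e. w \in N^+_k(v). *)
Fixpoint reach_le (T : finType) (e : rel T) (k : nat) (v w : T) : bool :=
  match k with
  | 0 => w == v
  | k'.+1 => reach_le e k' v w || [exists u, reach_le e k' v u && e u w]
  end.

(* s = (x_1,...,x_b) (stored 0-indexed) is a burning sequence:
   V(D) = \bigcup_{i=1}^b N^+_{i-1}(x_i). *)
Definition burning_seq (T : finType) (e : rel T) (s : seq T) : Prop :=
  forall w : T, exists2 i : nat, i < size s & reach_le e i (nth w s i) w.

Definition is_burning_number (T : finType) (e : rel T) (b : nat) : Prop :=
  (exists s : seq T, size s = b /\ burning_seq e s) /\
  (forall s : seq T, burning_seq e s -> b <= size s).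

Definition dpath (n : nat) : rel 'I_n := fun i j => val j == (val i).+1.
Arguments dpath n : clear implicits.

(* Main.v *)
Require Import Defs.
From HB Require Import structures.
From mathcomp Require Import all_boot all_order all_algebra.
From mathcomp Require Import reals.
From mathcomp Require Import zify ring lra.
Import Order.TTheory GRing.Theory Num.Theory.
Lemma reachP n k (v w : 'I_n) : reach_le (dpath n) k v w = (v <= w <= v + k).
Proof.
elim: k w => [|k IH] w /=.
  by rewrite addn0 -eqn_leq eq_sym.
rewrite IH; apply/idP/idP.
- case/orP; first by lia.
  case/existsP => u /andP [hu]; rewrite IH in hu; rewrite /dpath => /eqP ->; move: hu; simpl; lia.
- move=> /andP [h1 h2].
  case: (leqP w (v + k)) => h3; first by apply/orP; left; lia.
  apply/orP; right; apply/existsP.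
  have hu : w.-1 < n by apply: leq_ltn_trans (leq_pred w) (ltn_ord w).
  exists (Ordinal hu); rewrite /dpath /= IH; apply/andP; split; [simpl; lia| apply/eqP; simpl; lia].
Qed.

Definition S k := (\sum_(j < k) j.+1)%N.
Lemma S2 k : (2 * S k = k * k.+1)%N.
Proof.
rewrite /S; elim: k => [|k IH]; first by rewrite big_ord0.
rewrite big_ord_recr /= mulnDr IH; lia.
Qed.
Lemma SS k : S k.+1 = (S k + k.+1)%N.
Proof. by rewrite /S big_ord_recr. Qed.

Lemma card_itv n (a i : nat) : #|[set w : 'I_n | a <= w <= a + i]| <= i.+1.
Proof.
rewrite cardE -(size_map val) -[i.+1](size_iota a).
apply: uniq_leq_size; first by rewrite map_inj_uniq ?enum_uniq //; exact: val_inj.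
move=> x /mapP [y]; rewrite mem_enum inE => hy ->; rewrite mem_iota /=; lia.
Qed.

Lemma card_bigcup_le (T : finType) m (A : nat -> {set T}) :
  #|\bigcup_(i < m) A i| <= \sum_(i < m) #|A i|.
Proof.
elim: m => [|m IH]; first by rewrite !big_ord0 cards0.
rewrite !big_ord_recr /=.
apply: leq_trans (leq_card_setU _ _).1 _; exact: leq_add.
Qed.

Lemma lower n (s : seq 'I_n) : burning_seq (dpath n) s -> 2 * n <= size s * (size s).+1.
Proof.
case: n s => [|n'] s hs; first by [].
rewrite -S2 leq_mul2l /=.
pose A i := [set w : 'I_n'.+1 | nth ord0 s i <= w <= nth ord0 s i + i].
apply: leq_trans (_ : #|\bigcup_(i < size s) A i| <= _).
  rewrite -{1}(card_ord n'.+1) -cardsT; apply: subset_leq_card.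
  apply/subsetP => w _; case: (hs w) => i hi hr.
  apply/bigcupP; exists (Ordinal hi) => //.
  rewrite inE /= (set_nth_default w) // -reachP; exact: hr.
apply: leq_trans (card_bigcup_le _ (size s) A) _.
rewrite /S; apply: leq_sum => i _; exact: card_itv.
Qed.

Lemma S_mono i j : i <= j -> S i <= S j.
Proof.
move=> h; have := S2 i; have := S2 j; have : i * i.+1 <= j * j.+1 by apply: leq_mul.
lia.
Qed.

Lemma upper n b : 1 <= n -> 2 * n <= b * b.+1 ->
  exists s : seq 'I_n, size s = b /\ burning_seq (dpath n) s.
Proof.
case: n => [|n'] // _ hb.
have b1 : 1 <= b by case: b hb => //; rewrite muln0 muln2.
pose p i := S b - S i.+1.
exists (mkseq (fun i => inord (minn (p i) n') : 'I_n'.+1) b); split; first by rewrite size_mkseq.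
move=> w.
have hex : exists i, p i <= w.
  exists b.-1; rewrite /p prednK // subnn //.
case: (ex_minnP hex) => i hi hmin.
have ib : i < b.
  by have := hmin b.-1; rewrite /p prednK // subnn => /(_ isT); lia.
exists i; first by rewrite size_mkseq.
rewrite nth_mkseq // reachP inordK; last by rewrite ltnS geq_minr.
have hw := ltn_ord w.
have Sb := S2 b.
have -> : minn (p i) n' = p i by apply/minn_idPl; lia.
apply/andP; split => //.
case: i hi hmin ib => [|j] hi hmin ib.
  rewrite /p addn0 (SS 0) /S big_ord0 /=; rewrite -/(S b). lia.
have : ~~ (p j <= w) by apply/negP => /hmin; lia.
have := SS j.+1; have := S_mono j.+2 b ib.
rewrite /p; lia.
Qed.

Section RealPart.
Local Open Scope ring_scope.
Lemma real_part (R : realType) (n b : nat) : (1 <= n)%N -> (2 * n <= b * b.+1)%N ->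
  (forall k, (2 * n <= k * k.+1)%N -> (b <= k)%N) ->
  (b%:Z = Num.ceil (Num.sqrt (2 * n%:R + 1 / 4) - 1 / 2 : R)).
Proof.
move=> n1 Pb minb.
case: b Pb minb => [|c] Pb minb; first by lia.
have ny : 2 * n%:R + 1 / 4 = (2 * n)%N%:R + 1/4 :> R by rewrite natrM.
have y0 : (0:R) < 2 * n%:R + 1 / 4 by have := ler0n R n; lra.
have notc : ~~ (2 * n <= c * c.+1)%N by apply/negP => /minb; lia.
apply/esym/ceil_def; apply/andP; split.
- have -> : ((c.+1)%:Z - 1)%:~R = c%:R :> R by rewrite -addn1 PoszD addrK.
  rewrite ltrBrDr.
  have h0 : (0:R) <= c%:R + 1/2 by have := ler0n R c; lra.
  rewrite -(ger0_norm h0) -sqrtr_sqr ltr_sqrt // ny.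
  have -> : (c%:R + 1/2)^+2 = (c * c.+1)%N%:R + 1/4 :> R.
    by rewrite natrM -addn1 natrD; field.
  by rewrite ltrD2r ltr_nat ltnNge.
- rewrite lerBlDr.
  have h0 : (0:R) <= (c.+1)%:Z%:~R + 1/2 by have := ler0n R c.+1; rewrite pmulrn; lra.
  rewrite -(ger0_norm h0) -sqrtr_sqr ler_sqrt ?sqr_ge0 // ny.
  have -> : ((c.+1)%:Z%:~R + 1/2)^+2 = (c.+1 * c.+2)%N%:R + 1/4 :> R.
    by rewrite natrM -[c.+2]addn1 natrD; field.
  by rewrite lerD2r ler_nat.
Qed.
End RealPart.

Theorem mainTheorem3 (R : realType) (n : nat) : (1 <= n)%N ->
  exists b : nat, is_burning_number (dpath n) b /\
    (b%:Z = Num.ceil (Num.sqrt (2 * n%:R + 1 / 4) - 1 / 2 : R))%R.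
Proof.
move=> n1.
have hex : exists b, (2 * n <= b * b.+1)%N by exists n; rewrite [(2 * n)%N]mulnC; apply: leq_mul => //; lia.
case: (ex_minnP hex) => b hb hmin.
exists b; split; first split.
- exact: upper.
- by move=> s /lower /hmin.
- exact: real_part.
Qed.
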